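(* Let $\Gamma$ be a 3-colex, $c\in\{r,b,g,y\}$, let $v$ be a $c$-vertex of $\Gamma^*$ and let $\nu_v$ be the 3-cell of $\Gamma^{*\setminus c}$ obtained by merging all tetrahedra incident on $v$. Then $\pi_c(B^X_v)=B^X_{\nu_v}$, the $X$-type stabilizer generator of the toric code on $\Gamma^{*\setminus c}$ attached to $\nu_v$, and $\pi_{c'}(B^X_v)=I$ for every color $c'\neq c$.
   Context: Colors are $\{r,b,g,y\}$. A 3-colex $\Gamma$ is a 3-dimensional cell complex without boundary in which every vertex is 4-valent and lies in exactly four 3-cells, and whose 3-cells are properly 4-colored: every face lies in exactly two 3-cells, which have different colors. The dual complex $\Gamma^*$ has an $i$-cell for every $(3-i)$-cell of $\Gamma$, with incidences reversed; every 3-cell of $\Gamma^*$ is a tetrahedron. A vertex of $\Gamma^*$ is given the color of the corresponding 3-cell of $\Gamma$, so the four vertices of each tetrahedron have distinct colors. A face of $\Gamma^*$ is an $x$-face if none of its vertices has color $x$; each tetrahedron $\nu$ has a unique $x$-face $\pi_x(\nu)$. The 3D color code on $\Gamma$ has one qubit per tetrahedron of $\Gamma^*$ and $X$-stabilizer generators $B^X_v=\prod_{\nu\ni v}X_\nu$ for vertices $v$ of $\Gamma^*$. For a color $x$, the minor complex $\Gamma^{*\setminus x}$ is obtained from $\Gamma^*$ by deleting all vertices of color $x$ together with all edges and faces incident to them; its faces are the $x$-faces of $\Gamma^*$ and its 3-cells are obtained by merging, for each $x$-vertex, the tetrahedra containing it. The 3D toric code on $\Gamma^{*\setminus x}$ has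 qubits on faces and $X$-stabilizer generators $B^X_\mu=\prod_{f\in\partial\mu}X_f$ for 3-cells $\mu$. Operators are mapped by $\pi_x(\prod_{\nu\in\Omega}X_\nu)=\prod_{\nu\in\Omega}X_{\pi_x(\nu)}$ (with $X_f^2=I$). *)

(* Defs.v *)
From mathcomp Require Import all_boot.
Set Implicit Arguments. Unset Strict Implicit. Unset Printing Implicit Defensive.

Definition color := 'I_4.

Record colex_dual := ColexDual {
  V : finType;                      (* vertices of Gamma^* (= 3-cells of Gamma) *)
  F : finType;                      (* faces of Gamma^*    (= edges of Gamma)   *)
  T : finType;                      (* tetrahedra of Gamma^* (= vertices of Gamma) *)
  col : V -> color;
  fv : F -> {set V};
  tv : T -> {set V};
  tf : T -> {set F};
  tv_card : forall t, #|tv t| = 4;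
  tv_col : forall t, {in tv t &, injective col};
  fv_card : forall f, #|fv f| = 3;
  tf_card : forall t, #|tf t| = 4;
  tf_sub : forall t f, f \in tf t -> fv f \subset tv t;
  face_two : forall f, #|[set t | f \in tf t]| = 2;
  xface_unique : forall t (x : color),
     #|[set f in tf t | x \notin [set col u | u in fv f]]| = 1
}.

Section Defs.
Variable G : colex_dual.

Definition xface (x : color) (f : F G) : bool :=
  x \notin [set col u | u in fv f].

Definition pi_face (x : color) (t : T G) : option (F G) :=
  [pick f in tf t | xface x f].

(* X-type Pauli operators are represented by their supports (products of X's
   over a set, with X^2 = I, i.e. mod-2 chains). *)

Definition BX_color (v : V G) : {set T G} := [set t | v \in tv t].

(* pi_x(prod_{nu in Omega} X_nu) = prod_{nu in Omega} X_{pi_x(nu)}, with X_f^2 = I: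
   X_f occurs iff an odd number of nu in Omega have pi_x(nu) = f. *)
Definition pi_op (x : color) (Om : {set T G}) : {set F G} :=
  [set f | odd #|[set t in Om | pi_face x t == Some f]|].

(* Minor complex Gamma^{*\x}: faces are the x-faces; the 3-cell nu_v (v an
   x-vertex) is the merger of the tetrahedra containing v, i.e. the mod-2 chain
   sum_{nu ∋ v} nu; its boundary is the mod-2 sum of the boundaries of these
   tetrahedra, restricted to the faces of the minor complex (x-faces). *)
Definition merged_boundary (x : color) (v : V G) : {set F G} :=
  [set f | xface x f && odd #|[set t | (v \in tv t) && (f \in tf t)]|].

Definition BX_toric (x : color) (v : V G) : {set F G} := merged_boundary x v.

Definition IdOp : {set F G} := set0.

End Defs.

(* Main.v *)
Require Import Defs.
From mathcomp Require Import all_boot.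

Lemma pi_faceE (G : colex_dual) (x : color) (t : T G) (f : F G) :
  (pi_face x t == Some f) = (f \in tf t) && xface x f.
Proof.
rewrite /pi_face; case: pickP => [f' /andP[Hf' Hx'] | H].
- have /cards1P [a Ha] : #|[set f in tf t | x \notin [set col u | u in fv f]]| == 1 by apply/eqP; exact: xface_unique.
  have Ef' : f' = a.
    apply/set1P; rewrite -Ha inE Hf'; exact Hx'.
  apply/idP/idP.
    by move/eqP=> [<-]; rewrite Hf'.
  move=> Hf; have Ef : f = a.
    by apply/set1P; rewrite -Ha inE.
  by rewrite Ef Ef'.
- by rewrite H.
Qed.

Lemma v_in_face (G : colex_dual) (c' : color) (t : T G) (f : F G) (v : V G) :
  f \in tf t -> xface c' f -> v \in tv t -> col v != c' -> v \in fv f.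
Proof.
move=> Hf Hx Hv Hc.
have Himg : #|[set col u | u in tv t]| = 4.
  by rewrite card_in_imset ?tv_card //; apply: tv_col.
have : c' \in [set col u | u in tv t].
  have -> : [set col u | u in tv t] = [set: color].
    apply/eqP; rewrite eqEcard subsetT cardsT Himg card_ord //.
  by rewrite inE.
case/imsetP=> u Hu Eu.
apply/negPn/negP=> Hvf.
have Huf : u \notin fv f.
  apply/negP=> Hu'; move: Hx; rewrite /xface Eu.
  by rewrite (imset_f (@col G) Hu').
have Hsub : fv f \subset (tv t :\ u) :\ v.
  apply/subsetP=> w Hw; rewrite !inE.
  have -> : w \in tv t by exact: (subsetP (tf_sub Hf)).
  rewrite andbT; apply/andP; split.
    by apply/eqP=> E; rewrite -E Hw in Hvf.
  by apply/eqP=> E; rewrite -E Hw in Huf.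
have := subset_leq_card Hsub.
have Hvu : v != u by apply/eqP=> E; move: Hc; rewrite E Eu eqxx.
have E1 := cardsD1 u (tv t).
have E2 := cardsD1 v (tv t :\ u).
rewrite Hu tv_card in E1.
rewrite !inE Hvu Hv /= in E2.
rewrite fv_card; move=> Hle.
have : #|tv t :\ u :\ v| = 2.
  move: E1 E2; rewrite !add1n => E1 E2; rewrite E2 in E1; by case: E1.
by move=> E3; rewrite E3 in Hle.
Qed.

Theorem lemma7 (G : colex_dual) (c : color) (v : V G) :
  col v = c ->
  pi_op c (BX_color v) = BX_toric c v /\
  (forall c' : color, c' != c -> pi_op c' (BX_color v) = IdOp G).
Proof.
move=> Hcol; split.
- apply/setP=> f; rewrite /pi_op /BX_toric /merged_boundary !inE.
  case Hx: (xface c f).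
  + congr (odd _); apply: eq_card=> t; rewrite !inE pi_faceE Hx andbT.
    by [].
  + rewrite andFb; apply/negbTE.
    suff -> : [set t in BX_color v | pi_face c t == Some f] = set0 by rewrite cards0.
    apply/setP=> t; rewrite !inE pi_faceE Hx.
    by rewrite !andbF.
- move=> c' Hc'; apply/setP=> f; rewrite /pi_op /IdOp !inE.
  apply/negbTE.
  case: (boolP [exists t, (t \in BX_color v) && (pi_face c' t == Some f)]).
  + case/existsP=> t0 /andP[]; rewrite inE => Hv0; rewrite pi_faceE => /andP[Hf0 Hx].
    have Hvf : v \in fv f.
      by apply: (@v_in_face G c' t0 f v Hf0 Hx Hv0); rewrite Hcol eq_sym.
    have -> : [set t in BX_color v | pi_face c' t == Some f] = [set t | f \in tf t].
      apply/setP=> t; rewrite !inE pi_faceE Hx andbT.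
      apply/andb_idl=> Hft; exact: (subsetP (tf_sub Hft)).
    by rewrite face_two.
  + rewrite negb_exists => /forallP H.
    suff -> : [set t in BX_color v | pi_face c' t == Some f] = set0 by rewrite cards0.
    by apply/setP=> t; rewrite !inE; have := H t; rewrite inE => /negbTE ->.
Qed.
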